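(* Let $v\ge 2$ be an integer and $\theta\in[0,1]$. In the tipsy cop and drunken robber game on the complete graph $K_v$ with cop and robber starting at distinct vertices, let $X$ be the capture time measured in rounds, where a round consists of one robber move followed by one cop move (so $X=n$ if the capture occurs during the $n$-th round). Then \[ \mathbb{E}[X]=\frac{1}{\frac{1}{v-1}+\frac{v-2}{v-1}\left(\frac{1}{v-1}\theta+1-\theta\right)}=\frac{(v-1)^2}{(v-1)^2-\theta(v-2)^2}. \]
   Context: Tipsy cop and drunken robber game on a finite connected graph $G$: a cop and a robber are placed at distinct vertices. Moves are numbered $1,2,3,\dots$; the robber makes the odd-numbered moves and the cop the even-numbered moves, and on each move the mover must move to a vertex adjacent to its current vertex (staying put is not allowed). The robber always moves to a neighbor chosen uniformly at random. The cop, independently at each of her moves, with probability $\theta$ moves to a neighbor chosen uniformly at random, and with probability $1-\theta$ makes a directed move to a neighbor lying on a shortest path to the robber's current vertex (in particular onto the robber's vertex if it is adjacent). All random choices are independent. The robber is captured (and the game ends) as soon as both occupy the same vertex, whether the robber moves onto the cop or the cop moves onto the robber. *)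

(* Defs.v *)
From HB Require Import structures.
From mathcomp Require Import all_boot all_order all_algebra.
From mathcomp Require Import all_classical all_reals all_analysis.
Set Implicit Arguments. Unset Strict Implicit. Unset Printing Implicit Defensive.
Import Order.TTheory GRing.Theory Num.Theory.
Local Open Scope ring_scope.

(* A simple graph is a (symmetric, irreflexive) relation e on a finType T. *)
Section Game.
Variable T : finType.
Variable e : rel T.

Definition nbrs (x : T) : {set T} := [set y | e x y].

Fixpoint ball (n : nat) (x : T) : {set T} :=
  if n is n'.+1 then ball n' x :|: \bigcup_(y in ball n' x) nbrs y
  else [set x].

(* graph distance (least n with y in ball n x; meaningful on connected graphs) *)
Definition gdist (x y : T) : nat := find (fun n => y \in ball n x) (iota 0 #|T|).

Definition geo_nbrs (c r : T) : {set T} :=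
  [set w in nbrs c | (gdist w r).+1 == gdist c r].

Variable R : realType.
Variable theta : R.

Definition robP (r r' : T) : R :=
  if r' \in nbrs r then (#|nbrs r|%:R)^-1 else 0.

Definition copP (c r' c' : T) : R :=
  theta * (if c' \in nbrs c then (#|nbrs c|%:R)^-1 else 0)
  + (1 - theta) * (if c' \in geo_nbrs c r' then (#|geo_nbrs c r'|%:R)^-1 else 0).

(* sub-probability mass on (cop, robber) positions for the event
   "not captured yet"; one round = robber move then cop move,
   capture occurs when both occupy the same vertex. *)
Definition round_step (m : T -> T -> R) : T -> T -> R :=
  fun c' r' =>
    if c' == r' then 0 else
    \sum_(c : T) \sum_(r : T)
       m c r * (if r' == c then 0 else robP r r') * copP c r' c'.

Definition init_mass (c0 r0 : T) : T -> T -> R :=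
  fun c r => if (c == c0) && (r == r0) then 1 else 0.

(* P(X > n): probability of no capture during the first n rounds *)
Definition survival (c0 r0 : T) (n : nat) : R :=
  \sum_(c : T) \sum_(r : T) iter n round_step (init_mass c0 r0) c r.

Definition capture_pmf (c0 r0 : T) (n : nat) : R :=
  if n is n'.+1 then survival c0 r0 n' - survival c0 r0 n else 0.

End Game.

Definition complete_rel (v : nat) : rel 'I_v := fun x y => x != y.

(* Main.v *)
Require Import Defs.
From HB Require Import structures.
From mathcomp Require Import all_boot all_order all_algebra.
From mathcomp Require Import all_classical all_reals all_analysis.
From mathcomp Require Import zify ring lra.
Import Order.TTheory GRing.Theory Num.Theory numFieldNormedType.Exports.
Local Open Scope ring_scope.

Lemma nbrsK v (x : 'I_v) : nbrs (@complete_rel v) x = [set~ x].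
Proof. by apply/setP => y; rewrite !inE /complete_rel eq_sym. Qed.

Lemma card_nbrs v (x : 'I_v) : #|nbrs (@complete_rel v) x| = v.-1.
Proof. by rewrite nbrsK cardsC1 card_ord. Qed.

Lemma gdistK v (h : (2 <= v)%N) (x y : 'I_v) :
  gdist (@complete_rel v) x y = (x != y).
Proof.
rewrite /gdist card_ord.
case: v h x y => [|[|v']] // _ x y /=.
rewrite inE eq_sym.
case: eqP => //= yx.
suff -> : y \in [set x] :|: \bigcup_(y0 in [set x]) nbrs (@complete_rel _) y0 by [].
apply/setUP; right; apply/bigcupP; exists x; first by rewrite inE.
by rewrite nbrsK !inE; apply/eqP => E; apply: yx; rewrite E.
Qed.

Lemma geoK v (h : (2 <= v)%N) (c r : 'I_v) : c != r ->
  geo_nbrs (@complete_rel v) c r = [set r].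
Proof.
move=> cr; apply/setP => w; rewrite !inE !gdistK // cr /complete_rel.
case: (eqVneq w r) => [->|]//=; by rewrite ?cr ?andbF.
Qed.

Lemma count2 (R : realType) v (a b : 'I_v) (k : R) : a != b ->
  \sum_(x : 'I_v) (if (x != a) && (x != b) then k else 0) = v.-2%:R * k.
Proof.
move=> ab; rewrite -big_mkcond /=.
have -> : \sum_(x | (x != a) && (x != b)) k = \sum_(x in ~: [set a; b]) k.
  by apply: eq_bigl => x; rewrite !inE negb_or.
rewrite sumr_const mulr_natl; congr (_ *+ _).
have := cardsC [set a; b]; rewrite cards2 ab card_ord => E.
rewrite -[in RHS]E add2n //.
Qed.

Definition qK {R : realType} v (theta : R) : R := theta * (v.-2%:R / v.-1%:R) ^+ 2.

Lemma robK (R : realType) v (r r' : 'I_v) :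
  robP (@complete_rel v) R r r' = if r' != r then (v.-1%:R)^-1 else 0.
Proof. by rewrite /robP card_nbrs nbrsK !inE. Qed.

Lemma copK (R : realType) v (h : (2 <= v)%N) (theta : R) (c r' c' : 'I_v) : c != r' ->
  copP (@complete_rel v) theta c r' c' =
  theta * (if c' != c then (v.-1%:R)^-1 else 0) + (1 - theta) * (if c' == r' then 1 else 0).
Proof. by move=> cr; rewrite /copP geoK // card_nbrs nbrsK cards1 !inE invr1. Qed.

Lemma Fq (R : realType) v (h : (2 <= v)%N) (theta : R) (c r : 'I_v) : c != r ->
  \sum_(c' : 'I_v) \sum_(r' : 'I_v) (if c' == r' then 0 else
     (if r' == c then 0 else robP (@complete_rel v) R r r') * copP (@complete_rel v) theta c r' c')
  = qK v theta.
Proof.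
move=> cr; rewrite exchange_big /=.
rewrite (eq_bigr (fun r' => if (r' != c) && (r' != r) then
   (v.-1%:R)^-1 * (theta * (v.-2%:R * (v.-1%:R)^-1)) else 0)).
  by rewrite count2 // /qK; ring.
move=> r' _; case: (eqVneq r' c) => [->|r'c] /=.
  by rewrite big1 // => c' _; rewrite mul0r; case: ifP.
rewrite robK; case: (eqVneq r' r) => [->|r'r] /=.
  by rewrite big1 // => c' _; rewrite mul0r; case: ifP.
rewrite (eq_bigr (fun c' => (v.-1%:R)^-1 *
    (if (c' != r') && (c' != c) then theta * (v.-1%:R)^-1 else 0))).
  by rewrite -mulr_sumr count2 //; ring.
move=> c' _; rewrite copK 1?eq_sym //.
case: (eqVneq c' r') => [->|c'r'] /=; first by rewrite mulr0.
rewrite mulr0 addr0; by case: ifP; rewrite ?mulr0.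
Qed.

Lemma round_sum (R : realType) v (h : (2 <= v)%N) (theta : R) (m : 'I_v -> 'I_v -> R) :
  (forall c, m c c = 0) ->
  \sum_(c' : 'I_v) \sum_(r' : 'I_v) round_step (@complete_rel v) theta m c' r'
  = qK v theta * \sum_(c : 'I_v) \sum_(r : 'I_v) m c r.
Proof.
move=> m0.
have E : forall c' r', round_step (@complete_rel v) theta m c' r' =
  \sum_(c : 'I_v) \sum_(r : 'I_v) (if c' == r' then 0 else m c r *
     (if r' == c then 0 else robP (@complete_rel v) R r r') * copP (@complete_rel v) theta c r' c').
  move=> c' r'; rewrite /round_step; case: eqP => _ //.
  by rewrite big1 // => c _; rewrite big1.
under eq_bigr do under eq_bigr do rewrite E.
under eq_bigr => c' _ do rewrite exchange_big /=.
under eq_bigr => c' _ do under eq_bigr => c _ do rewrite exchange_big /=.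
rewrite exchange_big /=.
under eq_bigr => c _ do rewrite exchange_big /=.
rewrite mulr_sumr; apply: eq_bigr => c _; rewrite mulr_sumr; apply: eq_bigr => r _.
case: (eqVneq c r) => [->|cr].
  rewrite m0 mulr0; apply: big1 => c' _; apply: big1 => r' _.
  by case: ifP => _ //; rewrite !mul0r.
rewrite -(@Fq R v h theta c r cr) mulr_suml; apply: eq_bigr => c' _.
rewrite mulr_suml; apply: eq_bigr => r' _.
by case: ifP => _; [rewrite mul0r | rewrite [RHS]mulrC mulrA].
Qed.

Lemma iter_diag (R : realType) v (theta : R) (c0 r0 : 'I_v) n (c : 'I_v) :
  c0 != r0 ->
  iter n (round_step (@complete_rel v) theta) (init_mass R c0 r0) c c = 0.
Proof.
move=> cr; case: n => [|n] /=; last by rewrite /round_step eqxx.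
rewrite /init_mass; case: (eqVneq c c0) => [->|] //=.
by rewrite (negbTE cr).
Qed.

Lemma survivalK (R : realType) v (h : (2 <= v)%N) (theta : R) (c0 r0 : 'I_v) n :
  c0 != r0 -> survival (@complete_rel v) theta c0 r0 n = qK v theta ^+ n.
Proof.
move=> cr; elim: n => [|n IH].
  rewrite /survival /= /init_mass (bigD1 c0) //= (bigD1 r0) //= !eqxx /=.
  rewrite big1 ?addr0; last by move=> r /negbTE ->.
  rewrite big1 ?addr0 //; move=> c /negbTE cc0; apply: big1 => r _.
  by rewrite cc0.
rewrite /survival iterS round_sum // ?exprS; first by congr (_ * _).
by move=> c; apply: iter_diag.
Qed.

Local Open Scope classical_set_scope.
Local Open Scope ring_scope.

Lemma nr_bound (R : realType) (r : R) n : 0 <= r <= 1 ->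
  n%:R * r ^+ n * (1 - r) <= 1.
Proof.
case/andP => r0 r1; elim: n => [|n IH]; first by rewrite !mul0r ler01.
have B1 : r ^+ n.+1 <= 1 by apply: exprn_ile1.
have -> : n.+1%:R * r ^+ n.+1 * (1 - r) =
   r * (n%:R * r ^+ n * (1 - r)) + r ^+ n.+1 * (1 - r).
  by rewrite exprS -natr1; ring.
set A := (n%:R * _ * _) in IH *; set B := r ^+ n.+1 in B1 *.
nra.
Qed.

Lemma nq_cvg (R : realType) (q : R) : 0 <= q < 1 ->
  (fun n : nat => n%:R * q ^+ n) @ \oo --> (0:R).
Proof.
case/andP => q0 q1.
set r := Num.sqrt q.
have r0 : 0 <= r by apply: sqrtr_ge0.
have r1 : r < 1 by rewrite /r -sqrtr1 ltr_sqrt.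
have qr : q = r ^+ 2 by rewrite sqr_sqrtr.
apply: (@squeeze_cvgr _ _ _ _ (cst 0) (geometric ((1 - r)^-1) r)); last 2 first.
- exact: cvg_cst.
- by apply: cvg_geometric; rewrite ger0_norm.
apply: nearW => n /=.
rewrite qr -exprM mulr_ge0 ?exprn_ge0 ?sqr_ge0 //=.
rewrite mul2n -addnn exprD mulrA.
have := @nr_bound R r n; rewrite r0 (ltW r1) => /(_ isT) H.
have b : n%:R * r ^+ n <= (1 - r)^-1.
  by rewrite -div1r ler_pdivlMr // subr_gt0.
by rewrite ler_wpM2r // exprn_ge0.
Qed.

Theorem mainTheorem3 (R : realType) (v : nat) (theta : R) (c0 r0 : 'I_v) :
  (2 <= v)%N -> 0 <= theta <= 1 -> c0 != r0 ->
  (series (fun n : nat => n%:R * capture_pmf (@complete_rel v) theta c0 r0 n)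
     @ \oo --> 1 / ((v.-1%:R)^-1 + v.-2%:R / v.-1%:R * ((v.-1%:R)^-1 * theta + 1 - theta)))
  /\ 1 / ((v.-1%:R)^-1 + v.-2%:R / v.-1%:R * ((v.-1%:R)^-1 * theta + 1 - theta))
     = v.-1%:R ^+ 2 / (v.-1%:R ^+ 2 - theta * v.-2%:R ^+ 2).
Proof.
move=> h /andP[t0 t1] cr.
have wa : v.-1%:R = v.-2%:R + 1 :> R.
  by rewrite natr1; congr (_%:R); lia.
have a0 : 0 <= v.-2%:R :> R by [].
have D : (v.-1%:R)^-1 + v.-2%:R / v.-1%:R * ((v.-1%:R)^-1 * theta + 1 - theta)
    = 1 - qK v theta :> R.
  rewrite /qK wa; field.
  by rewrite natr1 pnatr_eq0.
set a : R := v.-2%:R in wa a0 D *.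
set q := qK v theta in D *.
have qa : q = theta * (a / (a + 1)) ^+ 2 by rewrite /q /qK wa.
have p0 : 0 <= a / (a + 1) by rewrite divr_ge0 // addr_ge0.
have p1 : a / (a + 1) < 1 by rewrite ltr_pdivrMr ?mul1r ?ltrDl // ltr_wpDl.
have q0 : 0 <= q by rewrite qa mulr_ge0 // sqr_ge0.
have q1 : q < 1.
  rewrite qa; set p := a / (a + 1) in p0 p1 *; nra.
have q1' : 1 - q != 0 by rewrite subr_eq0 eq_sym lt_eqF.
rewrite D; split; last first.
  rewrite wa qa; field; rewrite -/a.
  have P1 : 0 < (a + 1) ^+ 2 - theta * a ^+ 2 by nra.
  by rewrite gt_eqF //= gt_eqF // ltr_wpDl.
set u := (fun n : nat => n%:R * capture_pmf _ _ _ _ n).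
have uS : forall n, u n.+1 = n.+1%:R * (q ^+ n - q ^+ n.+1).
  by move=> n; rewrite /u /= !survivalK.
have S : forall n, series u n.+1 = (1 - q ^+ n) / (1 - q) - n%:R * q ^+ n.
  elim=> [|n IH].
    by rewrite seriesSr /series /= big_geq // /u /= !mul0r add0r expr0 subrr mul0r subr0.
  rewrite seriesSr IH uS exprS -natr1; field; exact: q1'.
rewrite -cvg_shiftS.
have -> : [sequence series u n.+1]_n = (fun n => (1 - q ^+ n) / (1 - q) - n%:R * q ^+ n).
  by apply/funext => n; rewrite /= S.
have -> : 1 / (1 - q) = (1 - 0) / (1 - q) - 0 by rewrite !subr0.
apply: cvgB; last by apply: nq_cvg; rewrite q0 q1.
apply: cvgMr_tmp; apply: cvgB; first exact: cvg_cst.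
by apply: cvg_expr; rewrite ger0_norm.
Qed.
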